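(* Let $\mathsf{M}_{\rho_0}[\boldsymbol{\alpha}]\triangleq\mathbb{E}_{\rho_0(\mathbf{x})}[\boldsymbol{\alpha}(\mathbf{x})\boldsymbol{\alpha}(\mathbf{x})^\intercal]$ and $\mathsf{M}_{\rho_1}[\boldsymbol{\beta}]\triangleq\mathbb{E}_{\rho_1(\mathbf{x}')}[\boldsymbol{\beta}(\mathbf{x}')\boldsymbol{\beta}(\mathbf{x}')^\intercal]$ (assumed invertible), and define $\mathsf{S}^{\mathsf{sqrt}}_{\rho_0,\rho_1}[\boldsymbol{\alpha},\boldsymbol{\beta}]\triangleq (\mathsf{M}_{\rho_0}[\boldsymbol{\alpha}])^{1/2}(\mathsf{M}_{\rho_1}[\boldsymbol{\beta}])^{1/2}$. Then this matrix shares the same spectrum as the kernel $k$: there exist matrices $\mathsf{U},\mathsf{V}$ with orthonormal columns and $\Sigma=\mathsf{diag}(\sigma_1,\ldots,\sigma_r)$ such that $\mathsf{S}^{\mathsf{sqrt}}_{\rho_0,\rho_1}[\boldsymbol{\alpha},\boldsymbol{\beta}]=\mathsf{U}\Sigma\mathsf{V}^\intercal=\sum_{i=1}^r\sigma_i\mathbf{u}_i\mathbf{v}_i^\intercal$, where $\sigma_i$ are the singular values in the SVD $k(\mathbf{x},\mathbf{x}')=\sum_{i=1}^r\sigma_i\phi_i(\mathbf{x})\psi_i(\mathbf{x}')$. Moreover, the ordered, normalized singular functions of $k$ are given by $\boldsymbol{\phi}(\mathbf{x})=\mathsf{U}^\intercal(\mathsf{M}_{\rho_0}[\boldsymbol{\alpha}])^{-1/2}\boldsymbol{\alpha}(\mathbf{x})$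 and $\boldsymbol{\psi}(\mathbf{x}')=\mathsf{V}^\intercal(\mathsf{M}_{\rho_1}[\boldsymbol{\beta}])^{-1/2}\boldsymbol{\beta}(\mathbf{x}')$; i.e., $\mathbb{E}_{\rho_0}[\boldsymbol{\phi}\boldsymbol{\phi}^\intercal]=\mathbb{E}_{\rho_1}[\boldsymbol{\psi}\boldsymbol{\psi}^\intercal]=\mathsf{I}$, $k(\mathbf{x},\mathbf{x}')=\boldsymbol{\phi}(\mathbf{x})^\intercal\Sigma\boldsymbol{\psi}(\mathbf{x}')$, $(\mathcal{K}^*\phi_i)=\sigma_i\psi_i$ and $(\mathcal{K}\psi_i)=\sigma_i\phi_i$.
   Context: Let $\mathcal{X}\subseteq\mathbb{R}^d$, let $p(\mathbf{x}'|\mathbf{x})$ be the transition density of a time-homogeneous Markov process, and let $\rho_0,\rho_1$ be the distributions of the current and future states. The Koopman operator $\mathcal{K}\colon L^2_{\rho_1}(\mathcal{X})\to L^2_{\rho_0}(\mathcal{X})$ is the integral operator $(\mathcal{K}g)(\mathbf{x})=\int k(\mathbf{x},\mathbf{x}')g(\mathbf{x}')\rho_1(\mathbf{x}')d\mathbf{x}'=\mathbb{E}_{p(\mathbf{x}'|\mathbf{x})}[g(\mathbf{x}')]$ with kernel $k(\mathbf{x},\mathbf{x}')\triangleq p(\mathbf{x}'|\mathbf{x})/\rho_1(\mathbf{x}')$; its adjoint is $(\mathcal{K}^*f)(\mathbf{x}')=\int k(\mathbf{x},\mathbf{x}')f(\mathbf{x})\rho_0(\mathbf{x})d\mathbf{x}$.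 Assume the operator has finite rank with factorized kernel $k(\mathbf{x},\mathbf{x}')=\boldsymbol{\alpha}(\mathbf{x})^\intercal\boldsymbol{\beta}(\mathbf{x}')=\sum_{i=1}^r\alpha_i(\mathbf{x})\beta_i(\mathbf{x}')$, and SVD $k(\mathbf{x},\mathbf{x}')=\sum_{i=1}^r\sigma_i\phi_i(\mathbf{x})\psi_i(\mathbf{x}')$ with $\langle\phi_i,\phi_j\rangle_{\rho_0}=\langle\psi_i,\psi_j\rangle_{\rho_1}=\delta_{ij}$ and $1=\sigma_1\ge\sigma_2\ge\cdots\ge\sigma_r\ge0$. *)

(* Defs.v *)
From HB Require Import structures.
From mathcomp Require Import all_boot all_order all_algebra.
From mathcomp Require Import all_classical all_reals all_analysis.
Set Implicit Arguments. Unset Strict Implicit. Unset Printing Implicit Defensive.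
Import Order.TTheory GRing.Theory Num.Theory.
Local Open Scope ring_scope.
Local Open Scope classical_set_scope.

Definition moment_mx (d : measure_display) (T : measurableType d) (R : realType)
  (rho : {measure set T -> \bar R}) (r : nat) (f : 'I_r -> T -> R) : 'M[R]_r :=
  \matrix_(i, j) Rintegral rho setT (fun x => f i x * f j x).

Definition vec_at (T : Type) (R : nzRingType) (r : nat) (f : 'I_r -> T -> R) (x : T)
  : 'cV[R]_r := \col_i f i x.

(* A is the (principal) matrix square root of M: A is symmetric positive
   semidefinite and A A = M.  (This determines A uniquely.) *)
Definition is_psd_sqrt (R : realType) (r : nat) (A M : 'M[R]_r) : Prop :=
  A^T = A /\ (forall v : 'cV[R]_r, 0 <= (v^T *m A *m v) 0 0) /\ A *m A = M.

Definition koopman (d : measure_display) (T : measurableType d) (R : realType)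
  (rho1 : {measure set T -> \bar R}) (k : T -> T -> R) (g : T -> R) : T -> R :=
  fun x => Rintegral rho1 setT (fun x' => k x x' * g x').

Definition koopman_adj (d : measure_display) (T : measurableType d) (R : realType)
  (rho0 : {measure set T -> \bar R}) (k : T -> T -> R) (f : T -> R) : T -> R :=
  fun x' => Rintegral rho0 setT (fun x => k x x' * f x).

Definition in_L2 (d : measure_display) (T : measurableType d) (R : realType)
  (rho : {measure set T -> \bar R}) (f : T -> R) : Prop :=
  measurable_fun setT f /\ rho.-integrable setT (fun x => ((f x) ^+ 2)%:E).

Definition orthonormal_L2 (d : measure_display) (T : measurableType d) (R : realType)
  (rho : {measure set T -> \bar R}) (r : nat) (f : 'I_r -> T -> R) : Prop :=
  (forall i, in_L2 rho (f i)) /\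
  forall i j, Rintegral rho setT (fun x => f i x * f j x) = (i == j)%:R.

(* Main.v *)
Set Warnings "-all".
Require Import Defs.
From HB Require Import structures.
From mathcomp Require Import all_boot all_order all_algebra.
From mathcomp Require Import all_classical all_reals all_analysis.
From mathcomp Require Import measurable_realfun.
From mathcomp Require Import ring lra.
Import Order.TTheory GRing.Theory Num.Theory.
Local Open Scope ring_scope.
Local Open Scope classical_set_scope.
Set Implicit Arguments. Unset Strict Implicit.

Definition intR (d : measure_display) (T : measurableType d) (R : realType)
  (rho : {measure set T -> \bar R}) (f : T -> R) : Prop :=
  rho.-integrable setT (EFin \o f).

Lemma intR_sum (d : measure_display) (T : measurableType d) (R : realType)
  (rho : {measure set T -> \bar R}) (I : Type) (s : seq I) (F : I -> T -> R) :
  (forall i, intR rho (F i)) -> intR rho (fun x => \sum_(i <- s) F i x).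
Proof.
move=> hF.
have := @integrable_sum _ _ _ rho setT measurableT I s xpredT (fun i => EFin \o F i) (fun i _ => hF i).
apply: eq_integrable => // x _ /=.
by rewrite sumEFin.
Qed.

Lemma intRZ (d : measure_display) (T : measurableType d) (R : realType)
  (rho : {measure set T -> \bar R}) (c : R) (f : T -> R) :
  intR rho f -> intR rho (fun x => c * f x).
Proof.
move=> hf; have := integrableZl measurableT c hf.
by apply: eq_integrable => // x _ /=; rewrite EFinM.
Qed.

Lemma Rint_sum (d : measure_display) (T : measurableType d) (R : realType)
  (rho : {measure set T -> \bar R}) (I : Type) (s : seq I) (F : I -> T -> R) :
  (forall i, intR rho (F i)) ->
  Rintegral rho setT (fun x => \sum_(i <- s) F i x) =
  \sum_(i <- s) Rintegral rho setT (F i).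
Proof.
move=> hF; elim: s => [|i s IH].
  rewrite big_nil; under eq_Rintegral do rewrite big_nil.
  by rewrite Rintegral_cst // mul0r.
rewrite big_cons; under eq_Rintegral do rewrite big_cons.
rewrite RintegralD //; first by rewrite IH.
  exact: hF.
exact: (intR_sum s hF).
Qed.

Lemma L2_prod (d : measure_display) (T : measurableType d) (R : realType)
  (rho : {measure set T -> \bar R}) (f g : T -> R) :
  in_L2 rho f -> in_L2 rho g -> intR rho (fun x => f x * g x).
Proof.
move=> [mf If] [mg Ig].
apply: (@le_integrable _ _ _ rho setT measurableT _ (EFin \o (fun x => f x ^+ 2 + g x ^+ 2))).
- apply/measurable_EFinP. exact: measurable_realfun.measurable_funM.
- move=> x _ /=; rewrite lee_fin normrM.
  rewrite [X in _ <= X]ger0_norm ?addr_ge0 ?sqr_ge0 //.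
  rewrite -(real_normK (num_real (f x))) -(real_normK (num_real (g x))).
  have h1 := normr_ge0 (f x); have h2 := normr_ge0 (g x).
  nra.
- have := integrableD measurableT If Ig.
  by apply: eq_integrable => // x _ /=.
Qed.

Lemma L2_lin (d : measure_display) (T : measurableType d) (R : realType)
  (rho : {measure set T -> \bar R}) (n : nat) (c : 'I_n -> R) (f : 'I_n -> T -> R) :
  (forall j, in_L2 rho (f j)) -> in_L2 rho (fun x => \sum_j c j * f j x).
Proof.
move=> hf; split.
  apply: measurable_sum => j.
  apply: measurable_funM => //.
  by case: (hf j).
have -> : (fun x => ((\sum_j c j * f j x) ^+ 2)%:E) =
  EFin \o (fun x => \sum_j \sum_k (c j * c k) * (f j x * f k x)).
  apply/funext => x /=; congr EFin.
  rewrite expr2 mulr_suml; apply: eq_bigr => j _.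
  rewrite mulr_sumr; apply: eq_bigr => k _; ring.
apply: intR_sum => j; apply: intR_sum => k; apply: intRZ.
exact: L2_prod.
Qed.

Definition cross (d : measure_display) (T : measurableType d) (R : realType)
  (rho : {measure set T -> \bar R}) (m n : nat) (f : 'I_m -> T -> R)
  (g : 'I_n -> T -> R) : 'M[R]_(m, n) :=
  \matrix_(i, j) Rintegral rho setT (fun x => f i x * g j x).

Definition lin (T : Type) (R : realType) (m n : nat) (P : 'M[R]_(m, n))
  (f : 'I_n -> T -> R) : 'I_m -> T -> R :=
  fun i x => (P *m vec_at f x) i 0.

Lemma linE (T : Type) (R : realType) (m n : nat) (P : 'M[R]_(m, n))
  (f : 'I_n -> T -> R) i x : lin P f i x = \sum_j P i j * f j x.
Proof. by rewrite /lin mxE; apply: eq_bigr => j _; rewrite /vec_at mxE. Qed.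

Lemma lin_L2 (d : measure_display) (T : measurableType d) (R : realType)
  (rho : {measure set T -> \bar R}) (m n : nat) (P : 'M[R]_(m, n)) (f : 'I_n -> T -> R) :
  (forall j, in_L2 rho (f j)) -> forall i, in_L2 rho (lin P f i).
Proof.
move=> hf i.
have -> : lin P f i = (fun x => \sum_j P i j * f j x) by apply/funext => x; rewrite linE.
exact: L2_lin.
Qed.

Lemma cross_lin (d : measure_display) (T : measurableType d) (R : realType)
  (rho : {measure set T -> \bar R}) (m n p : nat) (P : 'M[R]_(m, n))
  (f : 'I_n -> T -> R) (g : 'I_p -> T -> R) :
  (forall j, in_L2 rho (f j)) -> (forall j, in_L2 rho (g j)) ->
  cross rho (lin P f) g = P *m cross rho f g.
Proof.
move=> hf hg; apply/matrixP => i k; rewrite !mxE.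
have -> : (fun x => lin P f i x * g k x) =
   (fun x => \sum_j P i j * (f j x * g k x)).
  apply/funext => x; rewrite linE mulr_suml; apply: eq_bigr => j _; ring.
rewrite Rint_sum; last by move=> j; apply: intRZ; exact: L2_prod.
apply: eq_bigr => j _; rewrite mxE RintegralZl //.
exact: L2_prod.
Qed.

Lemma cross_tr (d : measure_display) (T : measurableType d) (R : realType)
  (rho : {measure set T -> \bar R}) (m n : nat)
  (f : 'I_m -> T -> R) (g : 'I_n -> T -> R) :
  cross rho f g = (cross rho g f)^T.
Proof.
apply/matrixP => i j; rewrite !mxE; apply: eq_Rintegral => x _; exact: mulrC.
Qed.

Lemma cross_linr (d : measure_display) (T : measurableType d) (R : realType)
  (rho : {measure set T -> \bar R}) (m n p : nat) (Q : 'M[R]_(p, n))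
  (f : 'I_m -> T -> R) (g : 'I_n -> T -> R) :
  (forall j, in_L2 rho (f j)) -> (forall j, in_L2 rho (g j)) ->
  cross rho f (lin Q g) = cross rho f g *m Q^T.
Proof.
move=> hf hg; rewrite cross_tr cross_lin // trmx_mul -cross_tr //.
Qed.

Lemma cross_eq (d : measure_display) (T : measurableType d) (R : realType)
  (rho : {measure set T -> \bar R}) (m n1 n2 p : nat) (A : 'M[R]_(m, n1))
  (B : 'M[R]_(m, n2)) (f : 'I_n1 -> T -> R) (g : 'I_n2 -> T -> R) (h : 'I_p -> T -> R) :
  (forall j, in_L2 rho (f j)) -> (forall j, in_L2 rho (g j)) ->
  (forall j, in_L2 rho (h j)) ->
  (forall x, A *m vec_at f x = B *m vec_at g x) ->
  A *m cross rho f h = B *m cross rho g h.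
Proof.
move=> hf hg hh e.
have E : lin A f = lin B g by apply/funext => i; apply/funext => x; rewrite /lin e.
by rewrite -cross_lin // E cross_lin.
Qed.

Lemma cross_id (d : measure_display) (T : measurableType d) (R : realType)
  (rho : {measure set T -> \bar R}) (n : nat) (f : 'I_n -> T -> R) :
  orthonormal_L2 rho f -> cross rho f f = 1%:M.
Proof. by move=> [_ h]; apply/matrixP => i j; rewrite !mxE h. Qed.

Lemma vec_inj (d : measure_display) (T : measurableType d) (R : realType)
  (rho : {measure set T -> \bar R}) (m n : nat) (A B : 'M[R]_(m, n))
  (f : 'I_n -> T -> R) :
  orthonormal_L2 rho f ->
  (forall x, A *m vec_at f x = B *m vec_at f x) -> A = B.
Proof.
move=> hf e; have := cross_eq hf.1 hf.1 hf.1 e.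
by rewrite cross_id // !mulmx1.
Qed.

Theorem theoremC1 (R : realType) (d : measure_display) (T : measurableType d)
  (rho0 rho1 : probability T R) (r : nat)
  (k : T -> T -> R) (alpha beta : 'I_r -> T -> R)
  (halpha : forall i, in_L2 rho0 (alpha i))
  (hbeta : forall i, in_L2 rho1 (beta i))
  (hk_fact : forall x x', k x x' = \sum_(i < r) alpha i x * beta i x')
  (sigma : 'I_r -> R) (phi0 psi0 : 'I_r -> T -> R)
  (hphi0 : orthonormal_L2 rho0 phi0) (hpsi0 : orthonormal_L2 rho1 psi0)
  (hk_svd : forall x x', k x x' = \sum_(i < r) sigma i * phi0 i x * psi0 i x')
  (hsigma1 : forall i : 'I_r, val i = 0%N -> sigma i = 1)
  (hsigma_sorted : forall i j : 'I_r, (i <= j)%N -> sigma j <= sigma i)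
  (hsigma_ge0 : forall i, 0 <= sigma i)
  (hM0 : moment_mx rho0 alpha \in unitmx) (hM1 : moment_mx rho1 beta \in unitmx)
  (A0 A1 : 'M[R]_r)
  (hA0 : is_psd_sqrt A0 (moment_mx rho0 alpha))
  (hA1 : is_psd_sqrt A1 (moment_mx rho1 beta)) :
  let Sigma : 'M[R]_r := diag_mx (\row_i sigma i) in
  exists U V : 'M[R]_r,
    U^T *m U = 1%:M /\ V^T *m V = 1%:M /\
    A0 *m A1 = U *m Sigma *m V^T /\
    let phi : 'I_r -> T -> R :=
      fun i x => (U^T *m invmx A0 *m vec_at alpha x) i 0 in
    let psi : 'I_r -> T -> R :=
      fun i x' => (V^T *m invmx A1 *m vec_at beta x') i 0 in
    moment_mx rho0 phi = 1%:M /\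
    moment_mx rho1 psi = 1%:M /\
    (forall x x', k x x' = ((vec_at phi x)^T *m Sigma *m vec_at psi x') 0 0) /\
    (forall i, koopman_adj rho0 k (phi i) = (fun x' => sigma i * psi i x')) /\
    (forall i, koopman rho1 k (psi i) = (fun x => sigma i * phi i x)).
Proof.
move=> Sg.
have hphiL := hphi0.1; have hpsiL := hpsi0.1.
have SgT : Sg^T = Sg by rewrite /Sg tr_diag_mx.
have vk : forall x x', (vec_at alpha x)^T *m vec_at beta x' =
    (vec_at phi0 x)^T *m Sg *m vec_at psi0 x'.
  move=> x x'; rewrite [LHS]mx11_scalar [RHS]mx11_scalar; congr (_%:M).
  rewrite /Sg mul_mx_diag !mxE.
  have -> : \sum_j (vec_at alpha x)^T 0 j * vec_at beta x' j 0 = k x x'.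
    by rewrite hk_fact; apply: eq_bigr => j _; rewrite !mxE.
  rewrite hk_svd; apply: eq_bigr => j _; rewrite !mxE; ring.
have vkt : forall x x', (vec_at beta x')^T *m vec_at alpha x =
    (vec_at psi0 x')^T *m Sg *m vec_at phi0 x.
  move=> x x'; have := congr1 trmx (vk x x').
  by rewrite !trmx_mul !trmxK SgT mulmxA.
pose P0 := (Sg *m cross rho1 psi0 beta *m invmx (moment_mx rho1 beta))^T.
have eP0 : forall x, vec_at alpha x = P0 *m vec_at phi0 x.
  move=> x.
  have h := cross_eq hbeta hpsiL hbeta (vk x).
  rewrite -[vec_at alpha x]trmxK.
  have -> : (vec_at alpha x)^T = (vec_at alpha x)^T *m cross rho1 beta beta
      *m invmx (moment_mx rho1 beta) by rewrite mulmxK.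
  by rewrite h /P0 !trmx_mul !trmxK !mulmxA.
have hal : alpha = lin P0 phi0.
  by apply/funext => i; apply/funext => x; rewrite /lin -eP0 /vec_at mxE.
clearbody P0.
pose Q0 := (Sg *m cross rho0 phi0 alpha *m invmx (moment_mx rho0 alpha))^T.
have eQ0 : forall x', vec_at beta x' = Q0 *m vec_at psi0 x'.
  move=> x'.
  have h := cross_eq halpha hphiL halpha (vkt^~ x').
  rewrite -[vec_at beta x']trmxK.
  have -> : (vec_at beta x')^T = (vec_at beta x')^T *m cross rho0 alpha alpha
      *m invmx (moment_mx rho0 alpha) by rewrite mulmxK.
  by rewrite h /Q0 !trmx_mul !trmxK !mulmxA.
have hbe : beta = lin Q0 psi0.
  by apply/funext => i; apply/funext => x; rewrite /lin -eQ0 /vec_at mxE.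
clearbody Q0.
have hM0' : moment_mx rho0 alpha = P0 *m P0^T.
  transitivity (cross rho0 (lin P0 phi0) (lin P0 phi0)); first by rewrite -hal.
  by rewrite cross_lin ?cross_linr ?cross_id ?mul1mx //; apply: lin_L2.
have hM1' : moment_mx rho1 beta = Q0 *m Q0^T.
  transitivity (cross rho1 (lin Q0 psi0) (lin Q0 psi0)); first by rewrite -hbe.
  by rewrite cross_lin ?cross_linr ?cross_id ?mul1mx //; apply: lin_L2.
have hPQ : P0^T *m Q0 = Sg.
  have h1 : forall x, (vec_at phi0 x)^T *m P0^T *m Q0 = (vec_at phi0 x)^T *m Sg.
    move=> x; apply: (vec_inj hpsi0) => x'.
    by rewrite -vk eP0 eQ0 trmx_mul !mulmxA.
  have h2 : Q0^T *m P0 = Sg.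
    apply: (vec_inj hphi0) => x.
    have := congr1 trmx (h1 x).
    by rewrite !trmx_mul !trmxK SgT !mulmxA.
  by rewrite -SgT -h2 trmx_mul trmxK.

have [A0s [_ A0sq]] := hA0.
have [A1s [_ A1sq]] := hA1.
have A0u : A0 \in unitmx by move: hM0; rewrite -A0sq unitmx_mul => /andP[].
have A1u : A1 \in unitmx by move: hM1; rewrite -A1sq unitmx_mul => /andP[].
pose U := invmx A0 *m P0.
pose V := invmx A1 *m Q0.
have UUt : U *m U^T = 1%:M.
  rewrite /U trmx_mul trmx_inv A0s.
  transitivity (invmx A0 *m (P0 *m P0^T) *m invmx A0); first by rewrite !mulmxA.
  by rewrite -hM0' -A0sq !mulmxA mulVmx // mul1mx mulmxV.
have VVt : V *m V^T = 1%:M.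
  rewrite /V trmx_mul trmx_inv A1s.
  transitivity (invmx A1 *m (Q0 *m Q0^T) *m invmx A1); first by rewrite !mulmxA.
  by rewrite -hM1' -A1sq !mulmxA mulVmx // mul1mx mulmxV.
have UtU := mulmx1C UUt.
have VtV := mulmx1C VVt.
have ephi : (fun i x => (U^T *m invmx A0 *m vec_at alpha x) i 0) = phi0.
  apply/funext => i; apply/funext => x.
  by rewrite eP0 -[U^T *m invmx A0 *m (P0 *m _)]mulmxA [invmx A0 *m _]mulmxA
    -/U mulmxA UtU mul1mx /vec_at mxE.
have epsi : (fun i x => (V^T *m invmx A1 *m vec_at beta x) i 0) = psi0.
  apply/funext => i; apply/funext => x.
  by rewrite eQ0 -[V^T *m invmx A1 *m (Q0 *m _)]mulmxA [invmx A1 *m _]mulmxA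
    -/V mulmxA VtV mul1mx /vec_at mxE.
exists U, V; split; first exact: UtU.
split; first exact: VtV.
split.
  rewrite /U /V trmx_mul trmx_inv A1s -hPQ.
  transitivity (invmx A0 *m (P0 *m P0^T) *m (Q0 *m Q0^T) *m invmx A1); last by rewrite !mulmxA.
  by rewrite -hM0' -hM1' -A0sq -A1sq !mulmxA mulVmx // mul1mx -!mulmxA mulmxV // mulmx1.
move=> phi psi.
have -> : phi = phi0 by exact: ephi.
have -> : psi = psi0 by exact: epsi.
split; first exact: cross_id hphi0.
split; first exact: cross_id hpsi0.
split.
  move=> x x'; rewrite hk_svd /Sg mul_mx_diag !mxE.
  by apply: eq_bigr => j _; rewrite !mxE; ring.
split.
  move=> i; apply/funext => x'; rewrite [sigma i * _]mulrC.
  have := congr1 (fun M : 'M[R]_(1, r) => M 0 i)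
    (cross_lin ((vec_at psi0 x')^T *m Sg) hphiL hphiL).
  rewrite cross_id // mulmx1 /Sg mul_mx_diag !mxE /= => <-.
  rewrite /koopman_adj; apply: eq_Rintegral => x _.
  rewrite linE hk_svd; congr (_ * _).
  by apply: eq_bigr => j _; rewrite !mxE; ring.
move=> i; apply/funext => x; rewrite [sigma i * _]mulrC.
have := congr1 (fun M : 'M[R]_(1, r) => M 0 i)
  (cross_lin ((vec_at phi0 x)^T *m Sg) hpsiL hpsiL).
rewrite cross_id // mulmx1 /Sg mul_mx_diag !mxE /= => <-.
rewrite /koopman; apply: eq_Rintegral => x' _.
rewrite linE hk_svd; congr (_ * _).
by apply: eq_bigr => j _; rewrite !mxE; ring.
Qed.
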